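(* Let $d\ge 1$ and $q\ge 2$ be integers. (a) If $\gcd(d,q)=1$, then the Hamming graph $H(d,q)$ is $\mathbb{Z}_{q^d}$-distance antimagic. In particular, the complete graph $K_q$ is $\mathbb{Z}_q$-distance antimagic for every $q\ge 2$. (b) If both $d$ and $q$ are even, then $H(d,q)$ is not $\mathbb{Z}_{q^d}$-distance antimagic.
   Context: $H(d,q)$ is the graph with vertex set $\mathbb{Z}_q^d$ in which two $d$-tuples are adjacent iff they differ in exactly one coordinate (equivalently the Cartesian product of $d$ copies of $K_q$). $\mathbb{Z}_m$ is the cyclic group of integers modulo $m$. For a graph $G$ with $n$ vertices and an Abelian group $A$ of order $n$ (written additively), and a bijection $f:V(G)\to A$, the weight of $x$ is $w_f(x)=\sum_{y\in N(x)} f(y)$ computed in $A$ ($N(x)$ the open neighbourhood). $f$ is an $A$-distance antimagic labelling if all weights are pairwise distinct; $G$ is $A$-distance antimagic if it admits such a labelling. *)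

(* Defs.v *)
From HB Require Import structures.
From mathcomp Require Import all_boot all_order all_algebra.
Set Implicit Arguments. Unset Strict Implicit. Unset Printing Implicit Defensive.
Import GRing.Theory.
Local Open Scope ring_scope.

Definition hvert (d q : nat) := {ffun 'I_d -> 'I_q}.

Definition hadj (d q : nat) (x y : hvert d q) : bool :=
  #|[set i : 'I_d | x i != y i]| == 1%N.

Definition hweight (d q : nat) (A : zmodType) (f : hvert d q -> A)
  (x : hvert d q) : A :=
  \sum_(y : hvert d q | hadj x y) f y.

Definition distance_antimagic_labelling (d q : nat) (A : zmodType)
  (f : hvert d q -> A) : Prop :=
  bijective f /\ injective (hweight f).

(* H(d,q) is Z_{q^d}-distance antimagic. 'Z_(q^d) is the cyclic group of
   order q^d provided q^d >= 2. *)
Definition hamming_Zdistance_antimagic (d q : nat) : Prop :=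
  exists f : hvert d q -> 'Z_(q ^ d), distance_antimagic_labelling f.

(* Main.v *)
Require Import Defs.
From HB Require Import structures.
From mathcomp Require Import all_boot all_order all_algebra.
From mathcomp Require Import zify ring.
Set Implicit Arguments. Unset Strict Implicit. Unset Printing Implicit Defensive.
Import GRing.Theory.

Section Nbr.
Variables d q : nat.
Definition upd (x : hvert d q) (i : 'I_d) (a : 'I_q) : hvert d q :=
  [ffun j => if j == i then a else x j].
Definition dset (x y : hvert d q) := [set j : 'I_d | x j != y j].

Lemma dset_upd x i a : dset x (upd x i a) = if a == x i then set0 else [set i].
Proof.
apply/setP => j; case: (eqVneq a (x i)) => [->|ha]; rewrite !inE ffunE;
case: (eqVneq j i) => [->|hji]; rewrite ?eqxx //= eq_sym //.
Qed.

Lemma sum_nbr (R : nmodType) (F : hvert d q -> R) x :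
  (\sum_(y | hadj x y) F y = \sum_(i < d) \sum_(a : 'I_q | a != x i) F (upd x i a))%R.
Proof.
have step1 y : ((if hadj x y then F y else 0) =
    \sum_(i < d) if dset x y == [set i] then F y else 0)%R.
  rewrite -big_mkcond /hadj -/(dset x y).
  case: (boolP (#|dset x y| == 1%N)) => [/cards1P [i0 ->]|hn].
  - rewrite (big_pred1 i0) // => i; rewrite eq_sym; apply/eqP/eqP => [/set1_inj|->] //.
  - rewrite big_pred0 // => i; apply/negP => /eqP hS; move: hn; rewrite hS cards1.
    by [].
rewrite big_mkcond /=.
under eq_bigr do rewrite step1.
rewrite exchange_big /=; apply: eq_bigr => i _.
rewrite -big_mkcond /=.
rewrite (reindex_onto (upd x i) (fun y => y i)).
  apply: eq_bigl => a; rewrite dset_upd ffunE eqxx eqxx andbT.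
  case: (eqVneq a (x i)) => [_|_]; last by rewrite eqxx.
  apply/negbTE/eqP => /setP /(_ i); rewrite !inE eqxx.
  by [].
move=> y /eqP hS; apply/ffunP => j; rewrite ffunE.
case: (eqVneq j i) => [->//|hji].
have : j \notin dset x y by rewrite hS inE.
by rewrite inE negbK => /eqP.
Qed.

Lemma hadj_sym (x y : hvert d q) : hadj x y = hadj y x.
Proof.
rewrite /hadj (_ : [set i | x i != y i] = [set i | y i != x i]) //.
by apply/setP => j; rewrite !inE eq_sym.
Qed.

Lemma deg_nbr (x : hvert d q) : #|[set y | hadj x y]| = (d * q.-1)%N.
Proof.
rewrite -sum1dep_card sum_nbr.
under eq_bigr => i _ do rewrite sum1dep_card.
rewrite (eq_bigr (fun _ => q.-1)) ?sum_nat_const ?card_ord //.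
move=> i _; have := cardC1 (x i); rewrite card_ord => <-.
by apply: eq_card => a; rewrite !inE.
Qed.
End Nbr.
Lemma card_hvert d q : 1 < q ^ d -> #|hvert d q| = #|'Z_(q ^ d)|.
Proof. by move=> n1; rewrite card_ffun !card_ord Zp_cast. Qed.

Lemma sum_Zp_ne0 n : 1 < n -> ~~ odd n -> (\sum_(z : 'Z_n) z)%R != 0%R.
Proof.
move=> n1 hn.
have -> : (\sum_(z : 'Z_n) z = ('C((Zp_trunc n).+2, 2))%:R)%R.
  rewrite -bin2_sum big_mkord natr_sum; apply: eq_bigr => z _; by rewrite natr_Zp.
rewrite Zp_cast //.
apply/eqP => /(congr1 val); rewrite /= val_Zp_nat // => h.
have hm : (n./2).*2 = n by rewrite -{2}(odd_double_half n) (negbTE hn).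
move: h; rewrite -hm bin2.
set m := n./2.
have m0 : 0 < m by move: n1; rewrite -hm -mul2n; lia.
have -> : (m.*2 * (m.*2).-1)./2 = m * (m.*2).-1.
  by rewrite -mul2n -mulnA mul2n doubleK.
move=> /eqP; rewrite -/(dvdn _ _) => hd.
have : m.*2 %| m * (m.*2).-1 + m.
  have -> : m * (m.*2).-1 + m = m.*2 * m by rewrite -mul2n; case: (m) m0 => // k _; lia.
  exact: dvdn_mulr.
by rewrite dvdn_addr // => /(dvdn_leq m0); rewrite -addnn; lia.
Qed.

Lemma partb d q : (1 <= d)%N -> (2 <= q)%N -> ~~ odd d -> ~~ odd q ->
  ~ hamming_Zdistance_antimagic d q.
Proof.
move=> d1 q2 hd hq [f [fb winj]].
have n1 : 1 < q ^ d by rewrite -(expn0 q) ltn_exp2l.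
have wb : bijective (hweight f) by apply: (inj_card_bij winj); rewrite card_hvert.
set S := (\sum_(z : 'Z_(q ^ d)) z)%R.
have S1 : S = (\sum_y f y)%R by rewrite /S (reindex f) //; exact: onW_bij.
have S2 : S = (\sum_x hweight f x)%R by rewrite /S (reindex (hweight f)) //; exact: onW_bij.
have S3 : (\sum_x hweight f x = (\sum_y f y) *+ (d * q.-1))%R.
  rewrite /hweight; under eq_bigr do rewrite big_mkcond.
  rewrite exchange_big -sumrMnl; apply: eq_bigr => y _.
  rewrite -big_mkcond /= (eq_bigl (fun x => x \in [set x | hadj y x])).
    by rewrite sumr_const deg_nbr.
  by move=> x; rewrite inE hadj_sym.
have S4 : (S + S = 0)%R.
  have : S = (- S)%R.
    rewrite {1}/S (reindex (fun z => - z)%R) /=; first by rewrite sumrN.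
    by exists (fun z => - z)%R => z _; rewrite opprK.
  by move=> {1}->; rewrite addNr.
have : S = 0%R.
  rewrite {1}S2 S3 -S1.
  have -> : (d * q.-1 = 2 * (d./2 * q.-1))%N.
    by rewrite mulnA mul2n -{1}(odd_double_half d) (negbTE hd) add0n.
  rewrite mulrnA mulr2n S4.
  by rewrite mul0rn.
by apply/eqP; apply: sum_Zp_ne0 => //; rewrite oddX (negbTE hq); case: (d) d1.
Qed.

Lemma sum_recl d (x : 'I_d.+1 -> nat) q :
  \sum_(i < d.+1) x i * q ^ i = x ord0 + q * \sum_(i < d) x (lift ord0 i) * q ^ i.
Proof.
rewrite big_ord_recl expn0 muln1 big_distrr /=; congr (_ + _).
by apply: eq_bigr => i _; rewrite /= /bump /= add1n expnS mulnCA.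
Qed.

Lemma enc_lt q d (x : 'I_d -> nat) : (forall i, x i < q) -> \sum_(i < d) x i * q ^ i < q ^ d.
Proof.
elim: d x => [|d IH] x hx; first by rewrite big_ord0 expn0.
rewrite sum_recl expnS.
have h1 := IH (fun i => x (lift ord0 i)) (fun i => hx _).
have h2 := hx ord0.
move: h1 h2; set S := \sum_(i < d) _; set Q := q ^ d; set a := x ord0.
move=> h1 h2; nia.
Qed.

Lemma enc_inj q d (x y : 'I_d -> nat) : (forall i, x i < q) -> (forall i, y i < q) ->
  \sum_(i < d) x i * q ^ i = \sum_(i < d) y i * q ^ i -> forall i, x i = y i.
Proof.
elim: d x y => [|d IH] x y hx hy; first by move=> _ [].
rewrite !sum_recl => he.
have q0 : 0 < q by case: q hx {he IH hy} => // /(_ ord0).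
have e0 : x ord0 = y ord0.
  have := congr1 (modn^~ q) he.
  by rewrite ![_ + q * _]addnC ![q * _]mulnC !modnMDl !modn_small.
move: he; rewrite e0 => /addnI /eqP; rewrite eqn_pmul2l // => /eqP he.
have IH' := IH _ _ (fun i => hx (lift ord0 i)) (fun i => hy (lift ord0 i)) he.
move=> i; case: (unliftP ord0 i) => [j ->|->] //; exact: IH'.
Qed.

Section Weight.
Variables (d q : nat) (R : comNzRingType) (Q : R).
Local Open Scope ring_scope.
Definition E (x : hvert d q) : R := \sum_(i < d) (x i : nat)%:R * Q ^+ i.

Lemma E_upd x i a : E (upd x i a) = E x + ((a : nat)%:R - (x i : nat)%:R) * Q ^+ i.
Proof.
rewrite /E (bigD1 i) //= [in RHS](bigD1 i) //= ffunE eqxx.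
rewrite (eq_bigr (fun j : 'I_d => (x j : nat)%:R * Q ^+ j)); last first.
  by move=> j hj; rewrite ffunE (negbTE hj).
set T := \sum_(j < d | j != i) _.
ring.
Qed.

Lemma hweight_E x : hweight E x =
  E x * ((d * q)%:R - q%:R - d%:R) + (\sum_(a : 'I_q) (a : nat)%:R) * \sum_(i < d) Q ^+ i.
Proof.
rewrite /hweight sum_nbr.
set A := \sum_(a : 'I_q) _.
have inner i : \sum_(a : 'I_q | a != x i) E (upd x i a) =
    E x * (q%:R - 1) + A * Q ^+ i - ((x i : nat)%:R * Q ^+ i) * q%:R.
  have h0 : upd x i (x i) = x by apply/ffunP => j; rewrite ffunE; case: eqP => // ->.
  have hb : \sum_(a : 'I_q) E (upd x i a) = E x + \sum_(a : 'I_q | a != x i) E (upd x i a).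
    by rewrite (bigD1 (x i)) //= h0.
  have -> : \sum_(a : 'I_q | a != x i) E (upd x i a) = \sum_(a : 'I_q) E (upd x i a) - E x.
    by rewrite hb addrAC subrr add0r.
  have hs : \sum_(a : 'I_q) E (upd x i a) =
      E x *+ q + (A * Q ^+ i - (x i : nat)%:R * Q ^+ i *+ q).
    under eq_bigr do rewrite E_upd.
    rewrite big_split sumr_const card_ord; congr (_ + _).
    under eq_bigr do rewrite mulrBl.
    by rewrite sumrB -mulr_suml sumr_const card_ord.
  rewrite hs; move: (E x) => e; clear; ring.
under eq_bigr do rewrite inner.
rewrite sumrB big_split sumr_const card_ord -mulr_sumr -mulr_suml.
rewrite (_ : \sum_(i < d) (x i : nat)%:R * Q ^+ i = E x) // natrM.
move: (E x) (\sum_(i < d) Q ^+ i) => e s; clear.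
change (e * (q%:R - 1) *+ d + A * s - e * q%:R = e * (d%:R * q%:R - q%:R - d%:R) + A * s).
ring.
Qed.
End Weight.

Lemma coprime_k d q k : 1 <= d -> 2 <= q -> coprime d q ->
  k = d * q.-1 + (q ^ d - q) -> coprime (q ^ d) k.
Proof.
move=> d1 q2 cop hk; apply: coprimeXl.
have hqd : q ^ d = q * q ^ d.-1 by rewrite -expnS prednK.
have t1 : 1 <= q ^ d.-1 by rewrite expn_gt0; lia.
have hm : k + d = q * (d + q ^ d.-1 - 1).
  move: t1; rewrite hk hqd; set t := q ^ d.-1 => t1; nia.
rewrite /coprime -dvdn1 -(eqP cop) dvdn_gcd; apply/andP; split; last exact: dvdn_gcdl.
have g1 : gcdn q k %| k + d by rewrite hm dvdn_mulr // dvdn_gcdl.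
by rewrite -(dvdn_addr _ (dvdn_gcdr q k)).
Qed.

Lemma parta d q : (1 <= d)%N -> (2 <= q)%N -> coprime d q ->
  hamming_Zdistance_antimagic d q.
Proof.
move=> d1 q2 cop.
have n1 : 1 < q ^ d by rewrite -(expn0 q) ltn_exp2l.
pose f := @E d q 'Z_(q ^ d) (q%:R)%R.
have fE x : f x = ((\sum_(i < d) x i * q ^ i)%N)%:R%R.
  by rewrite /f /E natr_sum; apply: eq_bigr => i _; rewrite natrM natrX.
have encE (x y : hvert d q) : \sum_(i < d) x i * q ^ i = \sum_(i < d) y i * q ^ i -> x = y.
  move=> h; apply/ffunP => i; apply: val_inj.
  exact: (enc_inj (fun i => ltn_ord (x i)) (fun i => ltn_ord (y i)) h).
have fval x : nat_of_ord (f x) = \sum_(i < d) x i * q ^ i.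
  by rewrite fE val_Zp_nat // modn_small // enc_lt.
have finj : injective f by move=> x y /(congr1 (@nat_of_ord _)); rewrite !fval => /encE.
exists f; split.
  by apply: (inj_card_bij finj); rewrite card_hvert.
set k := d * q.-1 + (q ^ d - q).
have ku : (k%:R : 'Z_(q ^ d))%R \is a GRing.unit by rewrite unitZpE // coprime_k.
have c0 : ((q ^ d)%:R : 'Z_(q ^ d))%R = 0%R.
  by apply: val_inj; rewrite /= val_Zp_nat // modnn.
have ck : (((d * q)%:R - q%:R - d%:R : 'Z_(q ^ d)) = k%:R)%R.
  apply: (@addIr _ ((q + d)%:R)%R).
  have qle : q <= q ^ d by rewrite -{1}(expn1 q) leq_pexp2l //; lia.
  rewrite -natrD.
  have -> : (k + (q + d) = d * q + q ^ d)%N by rewrite /k; lia.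
  rewrite [in RHS]natrD c0 addr0 natrD; ring.
move=> x y; rewrite !hweight_E ck => /addIr /(mulIr ku) /finj.
done.
Qed.

Theorem mainTheorem3 (d q : nat) (hd : (1 <= d)%N) (hq : (2 <= q)%N) :
  (coprime d q -> hamming_Zdistance_antimagic d q) /\
  (hamming_Zdistance_antimagic 1 q) /\
  (~~ odd d -> ~~ odd q -> ~ hamming_Zdistance_antimagic d q).
Proof.
split; first exact: parta.
split; first by apply: parta => //; rewrite /coprime gcd1n.
exact: partb.
Qed.
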